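(* Let $T\ge1$ and consider the MDP with states $\{1,2\}$ defined as follows. In state 1 there are two actions: action ''up'' gives reward $1$ and moves to state 1 with probability $1-\frac1T$ and to state 2 with probability $\frac1T$; action ''down'' gives reward $\frac12$ and moves to state 2 deterministically. In state 2 there is a single action, giving reward $\frac12$ and staying in state 2. Then $\|h^\star\|_{\mathrm{sp}}=\frac T2$ and $\inf_{\pi:\rho^\pi=\rho^\star}\|h^\pi\|_{\mathrm{sp}}=0$.
   Context: Policies are stationary Markovian. Gain $\rho^\pi(s)=\lim_T\frac1T\mathbb{E}^\pi_s[\sum_{t<T}r(S_t,A_t)]$, $\rho^\star=\sup_\pi\rho^\pi$; bias $h^\pi(s)=\mathrm{C}\text{-}\lim_T\mathbb{E}^\pi_s[\sum_{t<T}(r(S_t,A_t)-\rho^\pi(S_t))]$; $h^\star$ is the bias of a Blackwell-optimal policy (a policy optimal for the $\gamma$-discounted problem for all $\gamma$ sufficiently close to 1). $\|x\|_{\mathrm{sp}}=\max x-\min x$. *)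

(* Defs.v *)
From Stdlib Require Import Reals Lra.
From Coquelicot Require Import Coquelicot.
Open Scope R_scope.

Fixpoint fsum (n : nat) (f : nat -> R) : R :=
  match n with O => 0 | S k => fsum k f + f k end.

Fixpoint fmax (n : nat) (f : nat -> R) : R :=
  match n with O => f O | S k => Rmax (fmax k f) (f (S k)) end.
Fixpoint fmin (n : nat) (f : nat -> R) : R :=
  match n with O => f O | S k => Rmin (fmin k f) (f (S k)) end.

(* A finite MDP: states 0..nS-1, actions 0..nA-1, [avail s a] says action a is
   available in state s, reward [rew s a], transition prob [trans s a s']. *)
Record MDP := mkMDP {
  nS : nat; nA : nat;
  avail : nat -> nat -> Prop;
  rew : nat -> nat -> R;
  trans : nat -> nat -> nat -> R }.

(* Stationary Markovian (possibly randomized) policy: pi s a = prob. of a in s. *)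
Definition policy (M : MDP) (pi : nat -> nat -> R) : Prop :=
  forall s, (s < nS M)%nat ->
    (forall a, (a < nA M)%nat -> 0 <= pi s a) /\
    (forall a, (a < nA M)%nat -> ~ avail M s a -> pi s a = 0) /\
    fsum (nA M) (fun a => pi s a) = 1.

Definition Ppi (M : MDP) pi (s s' : nat) : R :=
  fsum (nA M) (fun a => pi s a * trans M s a s').
Definition rpi (M : MDP) pi (s : nat) : R :=
  fsum (nA M) (fun a => pi s a * rew M s a).

(* iterP t f s = E^pi_s [ f(S_t) ]  (= (P_pi^t f)(s)) *)
Fixpoint iterP (M : MDP) pi (t : nat) (f : nat -> R) (s : nat) : R :=
  match t with
  | O => f s
  | S k => fsum (nS M) (fun s' => Ppi M pi s s' * iterP M pi k f s')
  end.

(* E^pi_s [ r(S_t, A_t) ] = E^pi_s [ r_pi(S_t) ] *)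
Definition exp_rew (M : MDP) pi (t s : nat) : R := iterP M pi t (rpi M pi) s.

Definition gain (M : MDP) pi (s : nat) : R :=
  real (Lim_seq (fun N => fsum N (fun t => exp_rew M pi t s) / INR N)).

Definition rho_star (M : MDP) (s : nat) : R :=
  real (Lub_Rbar (fun x => exists pi, policy M pi /\ x = gain M pi s)).

(* bias h^pi(s) = Cesaro-lim_N E^pi_s[sum_{t<N} (r(S_t,A_t) - rho^pi(S_t))] *)
Definition bias (M : MDP) pi (s : nat) : R :=
  real (Lim_seq (fun N =>
    fsum N (fun n =>
      fsum n (fun t => exp_rew M pi t s - iterP M pi t (gain M pi) s)) / INR N)).

Definition disc_value (M : MDP) pi (g : R) (s : nat) : R :=
  Series (fun t => g ^ t * exp_rew M pi t s).

Definition blackwell_optimal (M : MDP) pi : Prop :=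
  policy M pi /\
  exists g0, 0 <= g0 < 1 /\
    forall g, g0 < g < 1 ->
      forall pi', policy M pi' ->
        forall s, (s < nS M)%nat -> disc_value M pi' g s <= disc_value M pi g s.

Definition span (M : MDP) (h : nat -> R) : R :=
  fmax (pred (nS M)) h - fmin (pred (nS M)) h.

(* The example MDP.  Paper state 1 = index 0, paper state 2 = index 1.
   Action 0 = "up", action 1 = "down"; in state index 1 only action 0 exists. *)
Definition ex_mdp (T : R) : MDP := {|
  nS := 2; nA := 2;
  avail := fun s a => (s = 0 /\ (a = 0 \/ a = 1))%nat \/ (s = 1 /\ a = 0)%nat;
  rew := fun s a =>
    match s, a with
    | O, O => 1
    | O, S O => 1/2
    | S O, O => 1/2
    | _, _ => 0
    end;
  trans := fun s a s' =>
    match s, a, s' with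
    | O, O, O => 1 - / T
    | O, O, S O => / T
    | O, S O, S O => 1
    | S O, O, S O => 1
    | _, _, _ => 0
    end |}.

(* Main.v *)
Require Import Defs.
From Stdlib Require Import Reals Lra Lia.
From Coquelicot Require Import Coquelicot.
Open Scope R_scope.

Lemma fsum_ext n f g : (forall t, f t = g t) -> fsum n f = fsum n g.
Proof. intros H; induction n; simpl; [reflexivity| rewrite IHn, H; reflexivity]. Qed.

Lemma fsum_lin n c e f : fsum n (fun t => c + e * f t) = c * INR n + e * fsum n f.
Proof. induction n; simpl fsum; [simpl; ring|]. rewrite IHn, S_INR; ring. Qed.

Lemma fsum_geom n q : fsum n (fun t => q ^ t) * (1 - q) = 1 - q ^ n.
Proof. induction n; simpl fsum; [simpl; ring|]. rewrite Rmult_plus_distr_r, IHn; simpl; ring. Qed.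

Lemma fsum_geom' n q : q <> 1 -> fsum n (fun t => q ^ t) = (1 - q ^ n) / (1 - q).
Proof. intros Hq. rewrite <- fsum_geom. field. lra. Qed.

Lemma inv_S_lim : is_lim_seq (fun n => / INR (S n)) 0.
Proof.
  apply (is_lim_seq_incr_1 (fun n => / INR n)).
  apply (is_lim_seq_inv INR p_infty); [apply is_lim_seq_INR| discriminate].
Qed.

Lemma avg_lim c e q : 0 <= q < 1 ->
  is_lim_seq (fun N => fsum N (fun t => c + e * q ^ t) / INR N) c.
Proof.
  intros Hq. apply is_lim_seq_incr_1.
  apply is_lim_seq_ext with
    (fun n => c + (e * ((1 - q ^ (S n)) / (1 - q))) * / INR (S n)).
  { intros n. rewrite fsum_lin, fsum_geom' by lra.
    assert (INR (S n) <> 0) by (rewrite S_INR; pose proof (pos_INR n); lra).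
    field; split; lra. }
  assert (Hl : c = c + (e * ((1 - 0) / (1 - q))) * 0) by ring.
  match goal with |- is_lim_seq ?v _ => enough (H : is_lim_seq v (c + (e * ((1 - 0) / (1 - q))) * 0)) by (rewrite <- Hl in H; exact H) end.
  apply is_lim_seq_plus'; [apply is_lim_seq_const|].
  apply is_lim_seq_mult'; [|apply inv_S_lim].
  apply is_lim_seq_scal_l with (a := e) (lu := Finite ((1-0)/(1-q))).
  unfold Rdiv. apply is_lim_seq_mult' with (v := fun _ => / (1 - q)); [|apply is_lim_seq_const].
  apply is_lim_seq_minus'; [apply is_lim_seq_const|].
  apply (is_lim_seq_incr_1 (fun n => q ^ n)). apply is_lim_seq_geom.
  rewrite Rabs_pos_eq; lra.
Qed.

Lemma pol_facts T pi : policy (ex_mdp T) pi ->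
  0 <= pi 0%nat 0%nat <= 1 /\ pi 0%nat 1%nat = 1 - pi 0%nat 0%nat /\
  pi 1%nat 0%nat = 1 /\ pi 1%nat 1%nat = 0.
Proof.
  intros H. destruct (H 0%nat) as [A0 [_ S0]]; [simpl; lia|].
  destruct (H 1%nat) as [A1 [N1 S1]]; [simpl; lia|].
  simpl in S0, S1.
  assert (h11 : pi 1%nat 1%nat = 0).
  { apply N1; [simpl; lia|]. simpl. intros [[? _]|[_ ?]]; discriminate. }
  pose proof (A0 0%nat ltac:(simpl; lia)). pose proof (A0 1%nat ltac:(simpl; lia)).
  repeat split; lra.
Qed.

Lemma iterP1 T pi f t : pi 1%nat 0%nat = 1 -> pi 1%nat 1%nat = 0 ->
  iterP (ex_mdp T) pi t f 1%nat = f 1%nat.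
Proof.
  intros h10 h11. induction t; [reflexivity|].
  simpl iterP. rewrite IHt. unfold Ppi. simpl. rewrite h10, h11. ring.
Qed.

Lemma iterP0 T pi f t : pi 1%nat 0%nat = 1 -> pi 1%nat 1%nat = 0 ->
  pi 0%nat 1%nat = 1 - pi 0%nat 0%nat ->
  iterP (ex_mdp T) pi t f 0%nat =
   (pi 0%nat 0%nat * (1 - / T)) ^ t * f 0%nat + (1 - (pi 0%nat 0%nat * (1 - / T)) ^ t) * f 1%nat.
Proof.
  intros h10 h11 h01. induction t; [simpl; ring|].
  simpl iterP. rewrite IHt, iterP1 by assumption. unfold Ppi. simpl. rewrite h01. ring.
Qed.

Lemma exp_rew0 T pi t : policy (ex_mdp T) pi ->
  exp_rew (ex_mdp T) pi t 0%nat = 1/2 + pi 0%nat 0%nat / 2 * (pi 0%nat 0%nat * (1 - / T)) ^ t.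
Proof.
  intros H. destruct (pol_facts T pi H) as [_ [h01 [h10 h11]]].
  unfold exp_rew. rewrite iterP0 by assumption. unfold rpi; simpl.
  rewrite h01, h10, h11. field.
Qed.

Lemma exp_rew1 T pi t : policy (ex_mdp T) pi ->
  exp_rew (ex_mdp T) pi t 1%nat = 1/2.
Proof.
  intros H. destruct (pol_facts T pi H) as [_ [h01 [h10 h11]]].
  unfold exp_rew. rewrite iterP1 by assumption. unfold rpi; simpl.
  rewrite h10, h11. field.
Qed.

Lemma q_bounds T p : 1 <= T -> 0 <= p <= 1 -> 0 <= p * (1 - / T) < 1.
Proof.
  intros hT hp. assert (0 < / T <= 1).
  { split; [apply Rinv_0_lt_compat; lra|]. rewrite <- Rinv_1. apply Rinv_le_contravar; lra. }
  split; [apply Rmult_le_pos; lra|]. nra.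
Qed.

Lemma gain_vals T pi : 1 <= T -> policy (ex_mdp T) pi ->
  gain (ex_mdp T) pi 0%nat = 1/2 /\ gain (ex_mdp T) pi 1%nat = 1/2.
Proof.
  intros hT H. destruct (pol_facts T pi H) as [hp _].
  pose proof (q_bounds T _ hT hp) as hq.
  unfold gain. split.
  - rewrite (is_lim_seq_unique _ (Finite (1/2))); [reflexivity|].
    eapply is_lim_seq_ext; [|apply (avg_lim _ (pi 0%nat 0%nat / 2) _ hq)].
    intros N. cbv beta. f_equal. apply fsum_ext. intros t. rewrite (exp_rew0 T pi t H). reflexivity.
  - rewrite (is_lim_seq_unique _ (Finite (1/2))); [reflexivity|].
    eapply is_lim_seq_ext; [|apply (avg_lim (1/2) 0 0 ltac:(lra))].
    intros N. cbv beta. f_equal. apply fsum_ext. intros t. rewrite (exp_rew1 T pi t H). ring.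
Qed.

Lemma bias_vals T pi : 1 <= T -> policy (ex_mdp T) pi ->
  bias (ex_mdp T) pi 0%nat = pi 0%nat 0%nat / 2 / (1 - pi 0%nat 0%nat * (1 - / T)) /\
  bias (ex_mdp T) pi 1%nat = 0.
Proof.
  intros hT H. destruct (pol_facts T pi H) as [hp [h01 [h10 h11]]].
  pose proof (q_bounds T _ hT hp) as hq.
  destruct (gain_vals T pi hT H) as [g0 g1].
  set (q := pi 0%nat 0%nat * (1 - / T)) in *.
  set (d := pi 0%nat 0%nat / 2).
  unfold bias. split.
  - rewrite (is_lim_seq_unique _ (Finite (d / (1 - q)))); [reflexivity|].
    eapply is_lim_seq_ext; [|apply (avg_lim (d / (1 - q)) (- (d / (1 - q))) q hq)].
    intros N. cbv beta. f_equal. apply fsum_ext. intros n.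
    rewrite (fsum_ext n _ (fun t => 0 + d * q ^ t)).
    2:{ intros t. rewrite exp_rew0 by exact H. rewrite iterP0 by assumption.
        rewrite g0, g1. unfold d, q. ring. }
    rewrite fsum_lin, fsum_geom' by lra. field. lra.
  - rewrite (is_lim_seq_unique _ (Finite 0)); [reflexivity|].
    eapply is_lim_seq_ext; [|apply (avg_lim 0 0 0 ltac:(lra))].
    intros N. cbv beta. f_equal. apply fsum_ext. intros n.
    rewrite (fsum_ext n _ (fun t => 0 + 0 * 0 ^ t)).
    2:{ intros t. rewrite exp_rew1 by exact H. rewrite iterP1 by assumption.
        rewrite g1. ring. }
    rewrite fsum_lin. ring.
Qed.

Lemma disc_vals T pi g : 1 <= T -> policy (ex_mdp T) pi -> 0 <= g < 1 ->
  disc_value (ex_mdp T) pi g 0%nat =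
    1/2 / (1 - g) + pi 0%nat 0%nat / 2 / (1 - g * (pi 0%nat 0%nat * (1 - / T))) /\
  disc_value (ex_mdp T) pi g 1%nat = 1/2 / (1 - g).
Proof.
  intros hT H hg. destruct (pol_facts T pi H) as [hp [h01 [h10 h11]]].
  pose proof (q_bounds T _ hT hp) as hq.
  set (q := pi 0%nat 0%nat * (1 - / T)) in *.
  set (d := pi 0%nat 0%nat / 2).
  assert (Gg : is_series (fun t => g ^ t) (/ (1 - g))).
  { apply is_series_geom. rewrite Rabs_pos_eq; lra. }
  assert (Ggq : is_series (fun t => (g * q) ^ t) (/ (1 - g * q))).
  { apply is_series_geom. rewrite Rabs_pos_eq; nra. }
  unfold disc_value. split.
  - apply is_series_unique.
    pose proof (is_series_plus _ _ _ _ (is_series_scal (1/2) _ _ Gg) (is_series_scal d _ _ Ggq)) as HS.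
    replace (1 / 2 / (1 - g) + d / (1 - g * q)) with (plus (scal (1/2) (/ (1 - g))) (scal d (/ (1 - g * q)))).
    2:{ unfold plus, scal; simpl; unfold mult; simpl. field. split; nra. }
    eapply is_series_ext; [|exact HS]. intros t. simpl.
    unfold plus, scal; simpl; unfold mult; simpl.
    rewrite exp_rew0 by exact H. fold q d. rewrite Rpow_mult_distr. ring.
  - apply is_series_unique.
    pose proof (is_series_scal (1/2) _ _ Gg) as HS.
    replace (1 / 2 / (1 - g)) with (scal (1/2) (/ (1 - g))).
    2:{ unfold scal; simpl; unfold mult; simpl. field. lra. }
    eapply is_series_ext; [|exact HS]. intros t. simpl.
    unfold scal; simpl; unfold mult; simpl.
    rewrite exp_rew1 by exact H. ring.
Qed.

Definition pistar (s a : nat) : R := match a with O => 1 | _ => 0 end.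
Definition pizero (s a : nat) : R :=
  match s, a with O, S O => 1 | S O, O => 1 | _, _ => 0 end.

Lemma pistar_pol T : policy (ex_mdp T) pistar.
Proof.
  intros s hs. simpl in hs. destruct s as [|[|s]]; [| |lia]; repeat split;
  try (intros a ha; destruct a as [|[|a]]; simpl in *; try lra; lia);
  try (intros a ha hn; destruct a as [|[|a]]; simpl in *; try reflexivity; try lia;
       exfalso; apply hn; tauto);
  simpl; lra.
Qed.

Lemma pizero_pol T : policy (ex_mdp T) pizero.
Proof.
  intros s hs. simpl in hs. destruct s as [|[|s]]; [| |lia]; repeat split;
  try (intros a ha; destruct a as [|[|a]]; simpl in *; try lra; lia);
  try (intros a ha hn; destruct a as [|[|a]]; simpl in *; try reflexivity; try lia;
       exfalso; apply hn; tauto);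
  simpl; lra.
Qed.

Lemma span_eq T h : span (ex_mdp T) h = Rmax (h 0%nat) (h 1%nat) - Rmin (h 0%nat) (h 1%nat).
Proof. reflexivity. Qed.

Lemma span_bias T pi : 1 <= T -> policy (ex_mdp T) pi ->
  span (ex_mdp T) (bias (ex_mdp T) pi) = pi 0%nat 0%nat / 2 / (1 - pi 0%nat 0%nat * (1 - / T))
  /\ 0 <= span (ex_mdp T) (bias (ex_mdp T) pi).
Proof.
  intros hT H. destruct (pol_facts T pi H) as [hp _].
  pose proof (q_bounds T _ hT hp) as hq.
  destruct (bias_vals T pi hT H) as [b0 b1].
  assert (0 <= pi 0%nat 0%nat / 2 / (1 - pi 0%nat 0%nat * (1 - / T))).
  { unfold Rdiv. apply Rmult_le_pos; [lra| left; apply Rinv_0_lt_compat; lra]. }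
  rewrite span_eq, b0, b1, Rmax_left, Rmin_right by lra. split; [ring| lra].
Qed.

Lemma rho_star_val T s : 1 <= T -> (s < 2)%nat -> rho_star (ex_mdp T) s = 1/2.
Proof.
  intros hT hs. unfold rho_star.
  rewrite (is_lub_Rbar_unique _ (Finite (1/2))); [reflexivity|].
  assert (G : forall pi, policy (ex_mdp T) pi -> gain (ex_mdp T) pi s = 1/2).
  { intros pi hp. destruct (gain_vals T pi hT hp). destruct s as [|[|s]]; auto; lia. }
  split.
  - intros x [pi [hp ->]]. rewrite G by exact hp. simpl. lra.
  - intros b hb. apply hb. exists pistar. split; [apply pistar_pol|]. rewrite G; [reflexivity|apply pistar_pol].
Qed.

Lemma key_ineq p c g : 0 <= p <= 1 -> 0 <= c < 1 -> 0 <= g < 1 ->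
  p / 2 / (1 - g * (p * c)) - 1 / 2 / (1 - g * (1 * c)) =
  (p * (1 - g * c) - (1 - g * (p * c))) / (2 * (1 - g * (p * c)) * (1 - g * c)).
Proof. intros. assert (0 <= g * c < 1) by nra. assert (0 <= g * (p * c) <= g * c) by nra.
  field. split; lra. Qed.

Theorem theorem27 (T : R) (hT : 1 <= T) :
  (exists pi, blackwell_optimal (ex_mdp T) pi) /\
  (forall pi, blackwell_optimal (ex_mdp T) pi ->
     span (ex_mdp T) (bias (ex_mdp T) pi) = T / 2) /\
  Glb_Rbar (fun x => exists pi, policy (ex_mdp T) pi /\
       (forall s, (s < nS (ex_mdp T))%nat ->
          gain (ex_mdp T) pi s = rho_star (ex_mdp T) s) /\
       x = span (ex_mdp T) (bias (ex_mdp T) pi)) = Finite 0.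
Proof.
  pose proof (q_bounds T 1 hT ltac:(lra)) as hc.
  assert (hTi : 0 < / T) by (apply Rinv_0_lt_compat; lra).
  assert (hps : pistar 0%nat 0%nat = 1) by reflexivity.
  split; [|split].
  - exists pistar. split; [apply pistar_pol|]. exists 0. split; [lra|].
    intros g hg pi' hpi' s hs. simpl in hs.
    destruct (pol_facts T pi' hpi') as [hp _].
    destruct (disc_vals T pi' g hT hpi' ltac:(lra)) as [d0 d1].
    destruct (disc_vals T pistar g hT (pistar_pol T) ltac:(lra)) as [e0 e1].
    destruct s as [|[|s]]; [| |lia].
    + rewrite d0, e0, hps.
      pose proof (key_ineq (pi' 0%nat 0%nat) (1 - / T) g hp ltac:(lra) ltac:(lra)) as K.
      assert (0 <= g * (1 - / T) < 1) by nra.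
      assert (0 <= g * (pi' 0%nat 0%nat * (1 - / T)) <= g * (1 - / T)) by nra.
      assert (0 < / (2 * (1 - g * (pi' 0%nat 0%nat * (1 - / T))) * (1 - g * (1 - / T)))).
      { apply Rinv_0_lt_compat. apply Rmult_lt_0_compat; [|lra]. lra. }
      replace (1 - g * (1 * (1 - / T))) with (1 - g * (1 - / T)) by ring.
      replace (1 * (1 - / T)) with (1 - / T) in K by ring.
      unfold Rdiv at 5 in K.
      assert (pi' 0%nat 0%nat * (1 - g * (1 - / T)) - (1 - g * (pi' 0%nat 0%nat * (1 - / T))) <= 0) by nra.
      nra.
    + rewrite d1, e1. lra.
  - intros pi [hpol [g0 [hg0 Hb]]].
    set (g := (g0 + 1) / 2).
    destruct (pol_facts T pi hpol) as [hp _].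
    pose proof (Hb g ltac:(unfold g; lra) pistar (pistar_pol T) 0%nat ltac:(simpl; lia)) as HB.
    destruct (disc_vals T pi g hT hpol ltac:(unfold g; lra)) as [d0 _].
    destruct (disc_vals T pistar g hT (pistar_pol T) ltac:(unfold g; lra)) as [e0 _].
    rewrite d0, e0, hps in HB.
    assert (hg : 0 <= g < 1) by (unfold g; lra).
    pose proof (key_ineq (pi 0%nat 0%nat) (1 - / T) g hp ltac:(lra) hg) as K.
    assert (0 <= g * (1 - / T) < 1) by nra.
    assert (0 <= g * (pi 0%nat 0%nat * (1 - / T)) <= g * (1 - / T)) by nra.
    assert (0 < (2 * (1 - g * (pi 0%nat 0%nat * (1 - / T))) * (1 - g * (1 - / T)))).
    { apply Rmult_lt_0_compat; [|lra]. lra. }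
    replace (1 * (1 - / T)) with (1 - / T) in K, HB by ring.
    assert (0 <= (pi 0%nat 0%nat * (1 - g * (1 - / T)) - (1 - g * (pi 0%nat 0%nat * (1 - / T)))) /
       (2 * (1 - g * (pi 0%nat 0%nat * (1 - / T))) * (1 - g * (1 - / T)))) by lra.
    assert (0 <= pi 0%nat 0%nat * (1 - g * (1 - / T)) - (1 - g * (pi 0%nat 0%nat * (1 - / T)))).
    { apply Rmult_le_reg_r with (/ (2 * (1 - g * (pi 0%nat 0%nat * (1 - / T))) * (1 - g * (1 - / T)))).
      - apply Rinv_0_lt_compat; lra.
      - rewrite Rmult_0_l. exact H2. }
    assert (hp1 : pi 0%nat 0%nat = 1) by nra.
    destruct (span_bias T pi hT hpol) as [-> _]. rewrite hp1. field. split; lra.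
  - apply is_glb_Rbar_unique. split.
    + intros x [pi [hp [_ ->]]]. destruct (span_bias T pi hT hp) as [_ Hn]. simpl. exact Hn.
    + intros b hb. apply hb. exists pizero. split; [apply pizero_pol|]. split.
      * intros s hs. rewrite rho_star_val by (simpl in hs; auto).
        destruct (gain_vals T pizero hT (pizero_pol T)). simpl in hs.
        destruct s as [|[|s]]; auto; lia.
      * destruct (span_bias T pizero hT (pizero_pol T)) as [-> _]. simpl. field. lra.
Qed.
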